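(* Let $K$ be a field and let $G_1$ and $G_2$ be non-empty finite simple graphs on $v_1$ and $v_2$ vertices, respectively. Let $G_0 := G_1 \# G_2$ be the zero-sum obtained by identifying a vertex of $G_1$ with a vertex of $G_2$; its cut ideal $I_{G_0}$ lies in a polynomial ring $R$ with $2^{v_1+v_2-2}$ variables. Let $G_1 \sqcup G_2$ be the disjoint union; its cut ideal lies in a polynomial ring $S$ with $2^{v_1+v_2-1}$ variables. Then there is an injective graded $K$-algebra homomorphism $\alpha: R \to S$ mapping the variables of $R$ onto variables of $S$ such that $$I_{G_1\sqcup G_2} = \alpha(I_{G_0}) + L,$$ where $\alpha(I_{G_0})$ denotes the ideal of $S$ generated by the image of $I_{G_0}$ and $L \subset S$ is an ideal minimally generated by $2^{v_1+v_2-2}$ linear forms. Furthermore, the cut variety $X_{G_1\sqcup G_2} \subset \mathbb{P}^{2^{v_1+v_2-1}-1}$ is isomorphic to the Segre embedding of $X_{G_1}\times X_{G_2}$ into $\mathbb{P}^{2^{v_1+v_2-2}-1}$.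
   Context: For a finite simple graph $G$ with vertex set $V(G)$ and edge set $E(G)$, an unordered partition $A|B$ of $V(G)$ (into two sets, one of which may be empty) defines the cut $Cut(A|B)$, the set of edges with one endpoint in $A$ and the other in $B$. The cut ideal $I_G$ is the kernel of the $K$-algebra homomorphism $\phi_G: K[q_{A|B} : A|B \text{ unordered partition of } V(G)] \to K[s_{ij}, t_{ij} : \{i,j\} \in E(G)]$, $q_{A|B} \mapsto \prod_{\{i,j\}\in Cut(A|B)} s_{ij} \prod_{\{i,j\}\in E(G)\setminus Cut(A|B)} t_{ij}$; this polynomial ring has $2^{|V(G)|-1}$ variables, and the cut variety $X_G\subset\mathbb{P}^{2^{|V(G)|-1}-1}$ is the projective variety defined by $I_G$. The zero-sum $G_1\# G_2$ of graphs $G_1=(V_1,E_1)$, $G_2=(V_2,E_2)$ with $V_1\cap V_2$ a single vertex is the graph with vertex set $V_1\cup V_2$ and edge set $E_1\cup E_2$. *)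

(* Defs.v *)
From HB Require Import structures.
From mathcomp Require Import all_boot all_order all_algebra.
From mathcomp Require Import mpoly.

Set Implicit Arguments.
Unset Strict Implicit.
Unset Printing Implicit Defensive.

Import GRing.Theory.
Local Open Scope ring_scope.

Definition ideal_gen (R : comNzRingType) (S : R -> Prop) : R -> Prop :=
  fun p => exists (n : nat) (c g : 'I_n -> R),
      (forall i, S (g i)) /\ p = \sum_(i < n) c i * g i.

Definition ideal_add (R : comNzRingType) (I J : R -> Prop) : R -> Prop :=
  fun p => exists a b, I a /\ J b /\ p = a + b.

Definition ideal_eq (R : comNzRingType) (I J : R -> Prop) : Prop :=
  forall p, I p <-> J p.

Definition ideal_image (R S : comNzRingType) (f : R -> S) (I : R -> Prop) : S -> Prop :=
  ideal_gen (fun q => exists p, I p /\ q = f p).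

Definition min_gen_linear (K : fieldType) (m : nat) (L : {mpoly K[m]} -> Prop)
    (N : nat) : Prop :=
  exists g : 'I_N -> {mpoly K[m]},
    injective g /\ (forall i, g i \is 1.-homog) /\
    ideal_eq (ideal_gen (fun q => exists i, q = g i)) L /\
    (forall j, ~ ideal_eq (ideal_gen (fun q => exists i, i != j /\ q = g i)) L).

Definition Xv (K : fieldType) (T : finType) (t : T) : {mpoly K[#|T|]} :=
  'X_(enum_rank t).
Arguments Xv K {T} t.

Definition vmap (K : fieldType) (n m : nat) (f : 'I_n -> 'I_m)
    (p : {mpoly K[n]}) : {mpoly K[m]} :=
  p \mPo [tuple 'X_(f i) | i < n].

Section Cut.
Variables (K : fieldType) (V : finType) (e : rel V).

(* unordered partitions A|B of V (one part may be empty), as the set {A, B} *)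
Definition is_upart (P : {set {set V}}) : bool :=
  [exists A : {set V}, P == [set A; ~: A]].
Definition upart := {P : {set {set V}} | is_upart P}.
HB.instance Definition _ := Finite.on upart.

Definition edgeT := {E : {set V} | [exists i, exists j, e i j && (E == [set i; j])]}.
HB.instance Definition _ := Finite.on edgeT.

Definition cuts (P : upart) (E : edgeT) : bool :=
  [exists A in val P, #|val E :&: A| == 1%N].

(* variables s_E = inl E, t_E = inr E *)
Definition cut_image (P : upart) : {mpoly K[#|{: edgeT + edgeT}|]} :=
  \prod_(E : edgeT) (if cuts P E then Xv K (inl E : (edgeT + edgeT)%type)
                     else Xv K (inr E : (edgeT + edgeT)%type)).

Definition cut_map (p : {mpoly K[#|{: upart}|]}) : {mpoly K[#|{: edgeT + edgeT}|]} :=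
  p \mPo [tuple cut_image (enum_val i) | i < #|{: upart}|].

Definition cut_ideal : {mpoly K[#|{: upart}|]} -> Prop := fun p => cut_map p = 0.
End Cut.
Arguments cut_map K {V} e p.
Arguments cut_ideal K {V} e p.
Arguments cut_image K {V} e P.

Section Sums.
Variables (V1 V2 : finType) (e1 : rel V1) (e2 : rel V2) (u1 : V1) (u2 : V2).

Definition dunion_rel : rel (V1 + V2) := fun x y =>
  match x, y with
  | inl a, inl b => e1 a b
  | inr c, inr d => e2 c d
  | _, _ => false
  end.

Definition glue (x : V1 + V2) : V1 + V2 := if x == inr u2 then inl u1 else x.

Definition zs_vert := {x : V1 + V2 | x != inr u2}.
HB.instance Definition _ := Finite.on zs_vert.

Definition zs_rel : rel zs_vert := fun x y =>
  [exists p : (V1 + V2) * (V1 + V2),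
     [&& dunion_rel p.1 p.2, glue p.1 == val x & glue p.2 == val y]].
End Sums.
Arguments zs_vert V1 {V2} u2.
Arguments zs_rel {V1 V2} e1 e2 u1 u2.

Section Segre.
Variables (K : fieldType) (V1 V2 : finType) (e1 : rel V1) (e2 : rel V2).
Let T1 : finType := upart V1.
Let T2 : finType := upart V2.

Definition ext1 (p : {mpoly K[#|{: T1}|]}) : {mpoly K[#|{: T1 + T2}|]} :=
  vmap (fun i => enum_rank (inl (enum_val i) : (T1 + T2)%type)) p.
Definition ext2 (p : {mpoly K[#|{: T2}|]}) : {mpoly K[#|{: T1 + T2}|]} :=
  vmap (fun i => enum_rank (inr (enum_val i) : (T1 + T2)%type)) p.

Definition segre_map (f : {mpoly K[#|{: T1 * T2}|]}) : {mpoly K[#|{: T1 + T2}|]} :=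
  f \mPo [tuple Xv K (inl (enum_val i).1 : (T1 + T2)%type) *
                Xv K (inr (enum_val i).2 : (T1 + T2)%type) | i < #|{: T1 * T2}|].

(* homogeneous ideal of the Segre image of X_{G1} x X_{G2} in P^{|T1||T2|-1}:
   kernel of K[z] -> K[x,y] / (I_{G1} + I_{G2}) *)
Definition segre_ideal : {mpoly K[#|{: T1 * T2}|]} -> Prop := fun f =>
  ideal_add (ideal_image ext1 (cut_ideal K e1)) (ideal_image ext2 (cut_ideal K e2))
            (segre_map f).
End Segre.
Arguments segre_ideal K {V1 V2} e1 e2 f.

(* Main.v *)
Require Import Defs.
From HB Require Import structures.
From mathcomp Require Import all_boot all_order all_algebra.
From mathcomp Require Import mpoly.
Set Implicit Arguments.
Unset Strict Implicit.
Unset Printing Implicit Defensive.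
Import GRing.Theory.
Local Open Scope ring_scope.

Section IdealGen.
Variables (R : comNzRingType) (S : R -> Prop).

Lemma ig_gen x : S x -> ideal_gen S x.
Proof.
move=> Sx; exists 1%N, (fun _ => 1), (fun _ => x); split=> //.
by rewrite big_ord1 mul1r.
Qed.

Lemma ig0 : ideal_gen S 0.
Proof. exists 0%N, (fun _ => 0), (fun _ => 0); split; first by case. by rewrite big_ord0. Qed.

Lemma igD x y : ideal_gen S x -> ideal_gen S y -> ideal_gen S (x + y).
Proof.
move=> [n [c [g [Sg ->]]]] [m [d [h [Sh ->]]]].
exists (n + m)%N, (fun i => match split i with inl a => c a | inr b => d b end),
  (fun i => match split i with inl a => g a | inr b => h b end).
split.
  by move=> i; case: (split i).
rewrite big_split_ord /=; congr (_ + _); apply: eq_bigr => i _.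
  by rewrite (unsplitK (inl i)).
by rewrite (unsplitK (inr i)).
Qed.

Lemma igM r x : ideal_gen S x -> ideal_gen S (r * x).
Proof.
move=> [n [c [g [Sg ->]]]]; exists n, (fun i => r * c i), g; split=> //.
by rewrite mulr_sumr; apply: eq_bigr => i _; rewrite mulrA.
Qed.

Lemma igN x : ideal_gen S x -> ideal_gen S (- x).
Proof. by move=> h; rewrite -mulN1r; apply: igM. Qed.

Lemma igB x y : ideal_gen S x -> ideal_gen S y -> ideal_gen S (x - y).
Proof. by move=> hx hy; apply: igD => //; apply: igN. Qed.

Lemma ig_sum (I : Type) (s : seq I) (P : pred I) (F : I -> R) :
  (forall i, P i -> ideal_gen S (F i)) -> ideal_gen S (\sum_(i <- s | P i) F i).
Proof.
move=> h; apply: (big_ind (ideal_gen S)) => //; [exact: ig0 | exact: igD].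
Qed.

Lemma ig_hom (T : nzRingType) (F : {rmorphism R -> T}) x :
  (forall y, S y -> F y = 0) -> ideal_gen S x -> F x = 0.
Proof.
move=> h [n [c [g [Sg ->]]]]; rewrite rmorph_sum big1 // => i _.
by rewrite rmorphM (h _ (Sg i)) mulr0.
Qed.

Lemma ig_prod_diff (I : Type) (s : seq I) (a b : I -> R) :
  (forall i, ideal_gen S (a i - b i)) ->
  ideal_gen S (\prod_(i <- s) a i - \prod_(i <- s) b i).
Proof.
move=> h; elim: s => [|x s IH]; first by rewrite !big_nil subrr; exact: ig0.
rewrite !big_cons.
have -> : a x * \prod_(j <- s) a j - b x * \prod_(j <- s) b j =
  a x * (\prod_(j <- s) a j - \prod_(j <- s) b j) +
  (\prod_(j <- s) b j) * (a x - b x).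
  by rewrite mulrBr mulrBr [_ * a x]mulrC [_ * b x]mulrC addrA subrK.
by apply: igD; apply: igM.
Qed.

Lemma ig_exp_diff (a b : R) k :
  ideal_gen S (a - b) -> ideal_gen S (a ^+ k - b ^+ k).
Proof.
move=> h; elim: k => [|k IH]; first by rewrite !expr0 subrr; exact: ig0.
rewrite !exprS.
have -> : a * a ^+ k - b * b ^+ k = a * (a ^+ k - b ^+ k) + b ^+ k * (a - b).
  by rewrite mulrBr mulrBr [_ * a]mulrC [_ * b]mulrC addrA subrK.
by apply: igD; apply: igM.
Qed.

End IdealGen.

Lemma ig_sub (R : comNzRingType) (S S' : R -> Prop) x :
  (forall y, S y -> ideal_gen S' y) -> ideal_gen S x -> ideal_gen S' x.
Proof.
move=> h [n [c [g [Sg ->]]]]; apply: ig_sum => i _; apply: igM; exact: h.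
Qed.

Section Hom.
Variables (K : fieldType) (n : nat) (S : nzRingType).
Variables (F G : {mpoly K[n]} -> S).
Hypotheses (FD : {morph F : x y / x + y}) (GD : {morph G : x y / x + y})
  (FM : {morph F : x y / x * y}) (GM : {morph G : x y / x * y})
  (F0 : F 0 = 0) (G0 : G 0 = 0) (F1 : F 1 = 1) (G1 : G 1 = 1)
  (FC : forall c, F c%:MP = G c%:MP) (FX : forall i, F 'X_i = G 'X_i).

Lemma hom_eq p : F p = G p.
Proof.
rewrite [p]mpolyE.
rewrite (big_morph F FD F0) (big_morph G GD G0); apply: eq_bigr => m _.
rewrite -!mul_mpolyC FM GM FC; congr (_ * _).
rewrite mpolyXE_id (big_morph F FM F1) (big_morph G GM G1).
apply: eq_bigr => i _; elim: (m i) => [|k IH]; first by rewrite !expr0 F1 G1.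
by rewrite !exprS FM GM FX IH.
Qed.
End Hom.

Section Comp.
Variable (K : fieldType).

Lemma comp_comp n k l (p : {mpoly K[n]}) (t : n.-tuple {mpoly K[k]})
    (u : k.-tuple {mpoly K[l]}) :
  (p \mPo t) \mPo u = p \mPo [tuple (tnth t i \mPo u) | i < n].
Proof.
apply: (@hom_eq K n _ (fun p => (p \mPo t) \mPo u)
                     (fun p => p \mPo [tuple (tnth t i \mPo u) | i < n])).
- by move=> x y; rewrite !rmorphD.
- by move=> x y; rewrite !rmorphD.
- by move=> x y; rewrite !rmorphM.
- by move=> x y; rewrite !rmorphM.
- by rewrite !rmorph0.
- by rewrite !rmorph0.
- by rewrite !rmorph1.
- by rewrite !rmorph1.
- by move=> c; rewrite !comp_mpolyC.
- by move=> i; rewrite !comp_mpolyXU -!tnth_nth tnth_mktuple.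
Qed.

Lemma vmapE n m (f : 'I_n -> 'I_m) (p : {mpoly K[n]}) :
  vmap f p = p \mPo [tuple 'X_(f i) | i < n].
Proof. by []. Qed.

Lemma vmapX n m (f : 'I_n -> 'I_m) i : vmap (K:=K) f 'X_i = 'X_(f i).
Proof. by rewrite vmapE comp_mpolyXU -tnth_nth tnth_mktuple. Qed.

Lemma vmap_comp n m l (f : 'I_n -> 'I_m) (t : m.-tuple {mpoly K[l]}) p :
  vmap f p \mPo t = p \mPo [tuple tnth t (f i) | i < n].
Proof.
rewrite vmapE comp_comp; congr (_ \mPo _); apply: eq_mktuple => i.
by rewrite tnth_mktuple comp_mpolyXU -tnth_nth.
Qed.

Lemma comp_vmap n m l (f : 'I_m -> 'I_l) (t : n.-tuple {mpoly K[m]}) p :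
  vmap f (p \mPo t) = p \mPo [tuple vmap f (tnth t i) | i < n].
Proof. by rewrite vmapE comp_comp. Qed.

Lemma vmap_inj n m (f : 'I_n -> 'I_m) (g : 'I_m -> 'I_n) :
  cancel f g -> cancel (vmap (K:=K) f) (vmap g).
Proof.
move=> fK p; rewrite [vmap f p]vmapE comp_vmap -[RHS]comp_mpoly_id.
congr (_ \mPo _); apply: eq_mktuple => i.
by rewrite tnth_mktuple vmapX fK.
Qed.

End Comp.

Lemma ig_cong (K : fieldType) n (t : n.-tuple {mpoly K[n]}) (p : {mpoly K[n]}) :
  ideal_gen (fun q => exists i, q = 'X_i - tnth t i) (p - (p \mPo t)).
Proof.
have -> : p \mPo t = \sum_(m <- msupp p) p@_m *: ('X_[m] \mPo t).
  rewrite {1}[p]mpolyE raddf_sum /=; apply: eq_bigr => m _.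
  by rewrite comp_mpolyZ.
rewrite {1}[p]mpolyE -sumrB; apply: ig_sum => m _.
rewrite -scalerBr -mul_mpolyC; apply: igM.
rewrite comp_mpolyX mpolyXE_id; apply: ig_prod_diff => i.
apply: ig_exp_diff; apply: ig_gen; by exists i.
Qed.

Lemma vmap1 K n m (f : 'I_n -> 'I_m) : vmap (K:=K) f 1 = 1.
Proof. exact: comp_mpoly1. Qed.
Lemma vmapM K n m (f : 'I_n -> 'I_m) p q : vmap (K:=K) f (p * q) = vmap f p * vmap f q.
Proof. exact: rmorphM. Qed.
Lemma vmapD K n m (f : 'I_n -> 'I_m) p q : vmap (K:=K) f (p + q) = vmap f p + vmap f q.
Proof. exact: rmorphD. Qed.
Lemma vmapZ K n m (f : 'I_n -> 'I_m) c p : vmap (K:=K) f (c *: p) = c *: vmap f p.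
Proof. exact: comp_mpolyZ. Qed.
Lemma vmap_sum K n m (f : 'I_n -> 'I_m) I (r : seq I) (P : pred I) F :
  vmap (K:=K) f (\sum_(i <- r | P i) F i) = \sum_(i <- r | P i) vmap f (F i).
Proof. exact: raddf_sum. Qed.
Lemma vmapC K n m (f : 'I_n -> 'I_m) c : vmap (K:=K) f c%:MP = c%:MP.
Proof. exact: comp_mpolyC. Qed.

Section Tensor.
Variables (K : fieldType) (nx ny nxy n1 n2 nc : nat).
Variables (fx : 'I_nx -> 'I_nxy) (fy : 'I_ny -> 'I_nxy).
Hypothesis cover : forall v, (exists i, fx i = v) \/ (exists j, fy j = v).

Local Notation ext1 := (vmap (K:=K) fx).
Local Notation ext2 := (vmap (K:=K) fy).

Definition Dec (h : {mpoly K[nxy]}) :=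
  exists s : seq ({mpoly K[nx]} * {mpoly K[ny]}),
    h = \sum_(x <- s) ext1 x.1 * ext2 x.2.

Lemma Dec0 : Dec 0. Proof. by exists [::]; rewrite big_nil. Qed.
Lemma Dec1 : Dec 1.
Proof. by exists [:: (1, 1)]; rewrite big_seq1 /= !vmap1 mulr1. Qed.
Lemma DecD x y : Dec x -> Dec y -> Dec (x + y).
Proof. by move=> [s ->] [s' ->]; exists (s ++ s'); rewrite big_cat. Qed.
Lemma DecM x y : Dec x -> Dec y -> Dec (x * y).
Proof.
move=> [s ->] [s' ->].
exists [seq (u.1 * v.1, u.2 * v.2) | u <- s, v <- s'].
rewrite big_allpairs_dep /= mulr_suml; apply: eq_bigr => u _.
rewrite mulr_sumr; apply: eq_bigr => v _ /=.
rewrite !vmapM -!mulrA; congr (_ * _).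
by rewrite mulrC -mulrA; congr (_ * _); rewrite mulrC.
Qed.
Lemma DecZ c x : Dec x -> Dec (c *: x).
Proof.
move=> [s ->]; exists [seq (c *: u.1, u.2) | u <- s].
rewrite big_map scaler_sumr; apply: eq_bigr => u _ /=.
by rewrite vmapZ scalerAl.
Qed.
Lemma DecX v : Dec 'X_v.
Proof.
case: (cover v) => [[i <-]|[j <-]].
  by exists [:: ('X_i, 1)]; rewrite big_seq1 /= vmap1 mulr1 vmapX.
by exists [:: (1, 'X_j)]; rewrite big_seq1 /= vmap1 mul1r vmapX.
Qed.

Lemma decomp (h : {mpoly K[nxy]}) : Dec h.
Proof.
rewrite [h]mpolyE; apply: (big_ind Dec); [exact: Dec0|exact: DecD|].
move=> m _; apply: DecZ; rewrite mpolyXE_id.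
apply: (big_ind Dec); [exact: Dec1|exact: DecM|] => i _.
elim: (m i) => [|k IH]; first by rewrite expr0; exact: Dec1.
by rewrite exprS; apply: DecM => //; exact: DecX.
Qed.

Lemma decomp_ord (h : {mpoly K[nxy]}) : exists N (a : 'I_N -> {mpoly K[nx]})
    (b : 'I_N -> {mpoly K[ny]}), h = \sum_(j < N) ext1 (a j) * ext2 (b j).
Proof.
have [s ->] := decomp h.
exists (size s), (fun j => (tnth (in_tuple s) j).1), (fun j => (tnth (in_tuple s) j).2).
by rewrite big_tnth.
Qed.

End Tensor.

Section Theta.
Variables (K : fieldType) (n1 n2 nc : nat).
Variables (g1 : 'I_n1 -> 'I_nc) (g2 : 'I_n2 -> 'I_nc).
Hypotheses (g1_inj : injective g1) (g2_inj : injective g2)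
  (g12 : forall i j, g1 i != g2 j).

Local Notation R1 := {mpoly K[n1]}.

Definition tT (v : 'I_nc) : {mpoly R1[n2]} :=
  if [pick i | g1 i == v] is Some i then ('X_i : R1)%:MP
  else if [pick j | g2 j == v] is Some j then 'X_j else 0.

Definition Theta (p : {mpoly K[nc]}) : {mpoly R1[n2]} :=
  map_mpoly (@mpolyC n1 K) p \mPo [tuple tT v | v < nc].

Lemma ThetaD : {morph Theta : x y / x + y}.
Proof. by move=> x y; rewrite /Theta !rmorphD. Qed.
Lemma ThetaM : {morph Theta : x y / x * y}.
Proof. by move=> x y; rewrite /Theta !rmorphM. Qed.
Lemma Theta0 : Theta 0 = 0. Proof. by rewrite /Theta !rmorph0. Qed.
Lemma Theta1 : Theta 1 = 1. Proof. by rewrite /Theta !rmorph1. Qed.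
Lemma ThetaC c : Theta c%:MP = (c%:MP)%:MP.
Proof. by rewrite /Theta map_mpolyC comp_mpolyC. Qed.
Lemma ThetaX v : Theta 'X_v = tT v.
Proof.
by rewrite /Theta map_mpolyX comp_mpolyXU -tnth_nth tnth_mktuple.
Qed.

Lemma Theta1E (a : R1) : Theta (vmap g1 a) = a%:MP.
Proof.
apply: (@hom_eq K n1 _ (fun a => Theta (vmap g1 a)) (fun a => a%:MP)).
- by move=> x y; rewrite vmapD ThetaD.
- by move=> x y; rewrite rmorphD.
- by move=> x y; rewrite vmapM ThetaM.
- by move=> x y; rewrite rmorphM.
- by rewrite (vmapC _ 0) Theta0.
- by rewrite rmorph0.
- by rewrite vmap1 Theta1.
- by rewrite rmorph1.
- by move=> c; rewrite vmapC ThetaC.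
- move=> i; rewrite vmapX ThetaX /tT.
  case: pickP => [i' /eqP /g1_inj -> //|/(_ i)]; by rewrite eqxx.
Qed.

Lemma Theta2E (b : {mpoly K[n2]}) : Theta (vmap g2 b) = map_mpoly (@mpolyC n1 K) b.
Proof.
apply: (@hom_eq K n2 _ (fun b => Theta (vmap g2 b)) (map_mpoly (@mpolyC n1 K))).
- by move=> x y; rewrite vmapD ThetaD.
- by move=> x y; rewrite rmorphD.
- by move=> x y; rewrite vmapM ThetaM.
- by move=> x y; rewrite rmorphM.
- by rewrite (vmapC _ 0) Theta0.
- by rewrite rmorph0.
- by rewrite vmap1 Theta1.
- by rewrite rmorph1.
- by move=> c; rewrite vmapC ThetaC map_mpolyC.
- move=> j; rewrite vmapX ThetaX /tT map_mpolyX.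
  case: pickP => [i' /eqP hij|_]; first by have := g12 i' j; rewrite hij eqxx.
  case: pickP => [j' /eqP /g2_inj -> //|/(_ j)]; by rewrite eqxx.
Qed.

End Theta.

Section Core.
Variables (K : fieldType) (n1 n2 N : nat).
Variables (al : 'I_N -> {mpoly K[n1]}) (c : 'I_N -> {mpoly K[n2]}).
Hypothesis H : \sum_(j < N) (al j)%:MP * map_mpoly (@mpolyC n1 K) (c j) = 0.

Lemma core : exists (Qm Pm : 'M[K]_N) (rk : nat), Qm *m Pm = 1%:M /\
  (forall k : 'I_N, (k < rk)%N -> \sum_(j < N) al j * (Qm j k)%:MP = 0) /\
  (forall k : 'I_N, (rk <= k)%N -> \sum_(j < N) Pm k j *: c j = 0).
Proof.
pose U := undup (flatten [seq msupp (c j) | j <- enum 'I_N]).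
pose M : 'M[K]_(N, size U) := \matrix_(j, k) (c j)@_(nth 0%MM U k).
pose Qm := col_ebase M; pose E := row_ebase M; pose rk := \rank M.
pose f := @mpolyC n1 K.
have QmU : Qm \in unitmx by exact: col_ebase_unit.
have EU : E \in unitmx by exact: row_ebase_unit.
have hM : Qm *m pid_mx rk *m E = M by exact: mulmx_ebase.
exists Qm, (invmx Qm), rk; split; first exact: mulmxV.
split.
- move=> k hk.
  pose al_ := \row_j al j.
  have ha : al_ *m map_mx f M = 0.
    apply/rowP => kk; rewrite !mxE.
    have := congr1 (mcoeff (nth 0%MM U kk)) H.
    rewrite raddf_sum mcoeff0 => h; apply: (etrans _ h); apply: eq_bigr => j _.
    rewrite !mxE /= mcoeffCM mcoeff_map_mpoly /f. reflexivity.
  pose be := al_ *m map_mx f Qm.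
  have hb : be *m (pid_mx rk : 'M_(N, size U)) = 0.
    have : be *m pid_mx rk *m map_mx f E = 0.
      by rewrite -ha -hM !map_mxM map_pid_mx /be !mulmxA.
    move/(congr1 (fun X => X *m map_mx f (invmx E))).
    by rewrite mul0mx -mulmxA -map_mxM mulmxV // map_mx1 mulmx1.
  have kU : (k < size U)%N by apply: (leq_trans hk); exact: rank_leq_col.
  have := congr1 (fun X : 'M[{mpoly K[n1]}]_(1, size U) => X ord0 (Ordinal kU)) hb; rewrite mxE (bigD1 k) //= big1.
    rewrite /pid_mx !mxE eqxx hk mulr1 addr0 => h; apply: (etrans _ h).
    by apply: eq_bigr => j _; rewrite !mxE.
  move=> l hl; rewrite /pid_mx [X in _ * X]mxE /=.
  by rewrite (_ : (nat_of_ord l == nat_of_ord k) = false) ?mulr0 //; apply/negbTE.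
- move=> k hk; apply/mpolyP => m; rewrite raddf_sum mcoeff0.
  case: (boolP (m \in U)) => mU.
  + have ik : (index m U < size U)%N by rewrite index_mem.
    have -> : \sum_(j < N) (invmx Qm k j *: c j)@_m =
              (invmx Qm *m M) k (Ordinal ik).
      by rewrite mxE; apply: eq_bigr => j _; rewrite /= mcoeffZ mxE /= nth_index.
    rewrite -hM !mulmxA mulVmx // mul1mx mxE big1 // => l _.
    rewrite /pid_mx mxE.
    have -> : (k < rk)%N = false by apply/negbTE; rewrite -leqNgt.
    by rewrite andbF mul0r.
  + rewrite big1 // => j _; rewrite /= mcoeffZ memN_msupp_eq0 ?mulr0 //.
    apply: contra mU => mj; rewrite mem_undup; apply/flatten_mapP.
    by exists j => //; rewrite mem_enum.
Qed.
End Core.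

Section TensorMain.
Variables (K : fieldType) (nx ny nxy n1 n2 nc : nat).
Variables (fx : 'I_nx -> 'I_nxy) (fy : 'I_ny -> 'I_nxy).
Hypothesis cover : forall v, (exists i, fx i = v) \/ (exists j, fy j = v).
Variables (t1 : nx.-tuple {mpoly K[n1]}) (t2 : ny.-tuple {mpoly K[n2]}).
Variables (g1 : 'I_n1 -> 'I_nc) (g2 : 'I_n2 -> 'I_nc).
Hypotheses (g1_inj : injective g1) (g2_inj : injective g2)
  (g12 : forall i j, g1 i != g2 j).
Variable tP : nxy.-tuple {mpoly K[nc]}.
Hypotheses (tP1 : forall i, tnth tP (fx i) = vmap g1 (tnth t1 i))
           (tP2 : forall j, tnth tP (fy j) = vmap g2 (tnth t2 j)).

Local Notation ext1 := (vmap (K:=K) fx).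
Local Notation ext2 := (vmap (K:=K) fy).

Lemma Phi1 p : ext1 p \mPo tP = vmap g1 (p \mPo t1).
Proof.
rewrite vmap_comp comp_vmap; congr (_ \mPo _); apply: eq_mktuple => i.
by rewrite tP1.
Qed.
Lemma Phi2 p : ext2 p \mPo tP = vmap g2 (p \mPo t2).
Proof.
rewrite vmap_comp comp_vmap; congr (_ \mPo _); apply: eq_mktuple => i.
by rewrite tP2.
Qed.

Lemma tensor (h : {mpoly K[nxy]}) : h \mPo tP = 0 ->
  ideal_add (ideal_image ext1 (fun a => a \mPo t1 = 0))
            (ideal_image ext2 (fun b => b \mPo t2 = 0)) h.
Proof.
have [N [a [b ->]]] := decomp_ord cover h.
move=> H0.
have H : \sum_(j < N) ((a j \mPo t1)%:MP * map_mpoly (@mpolyC n1 K) (b j \mPo t2)) = 0.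
  have := congr1 (@Theta K n1 n2 nc g1 g2) H0.
  rewrite Theta0 rmorph_sum (big_morph _ (@ThetaD K n1 n2 nc g1 g2) (@Theta0 K n1 n2 nc g1 g2)) => h0.
  apply: (etrans _ h0); apply: eq_bigr => j _.
  by rewrite rmorphM ThetaM /= Phi1 Phi2 Theta1E // Theta2E.
have [Qm [Pm [rk [QP [h1 h2]]]]] := core H.
pose A' := fun k : 'I_N => \sum_(j < N) Qm j k *: a j.
pose w := fun k : 'I_N => \sum_(j < N) Pm k j *: b j.
have -> : \sum_(j < N) ext1 (a j) * ext2 (b j) =
          \sum_(k < N) ext1 (A' k) * ext2 (w k).
  symmetry.
  rewrite (eq_bigr (fun k => \sum_(j < N) \sum_(l < N)
             (Qm j k * Pm k l) *: (ext1 (a j) * ext2 (b l)))); last first.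
    move=> k _; rewrite /A' /w !vmap_sum mulr_suml; apply: eq_bigr => j _.
    rewrite mulr_sumr; apply: eq_bigr => l _.
    by rewrite !vmapZ -scalerAl -scalerAr scalerA.
  rewrite exchange_big /=; apply: eq_bigr => j _.
  rewrite exchange_big /=.
  rewrite (bigD1 j) //= [X in _ + X]big1 ?addr0.
    rewrite -scaler_suml.
    have := congr1 (fun X : 'M[K]_N => X j j) QP; rewrite !mxE eqxx /= => ->.
    by rewrite scale1r.
  move=> l hl; rewrite -scaler_suml.
  have := congr1 (fun X : 'M[K]_N => X j l) QP; rewrite !mxE.
  rewrite (_ : (j == l) = false); last by apply/negbTE; rewrite eq_sym.
  by move=> ->; rewrite scale0r.
rewrite (bigID (fun k : 'I_N => (k < rk)%N)) /=.
exists (\sum_(k < N | (k < rk)%N) ext1 (A' k) * ext2 (w k)),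
       (\sum_(k < N | ~~ (k < rk)%N) ext1 (A' k) * ext2 (w k)).
split; [|split=> //].
- apply: ig_sum => k hk; rewrite mulrC; apply: igM; apply: ig_gen.
  exists (A' k); split=> //.
  rewrite /A' raddf_sum; apply: (etrans _ (h1 k hk)); apply: eq_bigr => j _.
  by rewrite /= comp_mpolyZ mulrC mul_mpolyC.
- apply: ig_sum => k hk; apply: igM; apply: ig_gen.
  exists (w k); split=> //.
  rewrite /w raddf_sum; apply: (etrans _ (h2 k _)); last by rewrite leqNgt.
  by apply: eq_bigr => j _; rewrite /= comp_mpolyZ.
Qed.
End TensorMain.

Section UP.
Variable V : finType.

Lemma mkP_proof (A : {set V}) : is_upart [set A; ~: A].
Proof. by apply/existsP; exists A. Qed.

Definition mkP (A : {set V}) : upart V := exist _ [set A; ~: A] (mkP_proof A).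

Definition rep (P : upart V) : {set V} := odflt set0 [pick A in val P].

Lemma upart_ex (P : upart V) : exists A, val P = [set A; ~: A].
Proof. by case: P => P /= /existsP [A /eqP ->]; exists A. Qed.

Lemma rep_in P : rep P \in val P.
Proof.
rewrite /rep; case: pickP => [A -> //|/=].
have [A ->] := upart_ex P; move/(_ A); by rewrite set21.
Qed.

Lemma mkPC A : mkP (~: A) = mkP A.
Proof. by apply: val_inj; rewrite /= setCK setUC. Qed.

Lemma upartE P : P = mkP (rep P).
Proof.
have := rep_in P; have [A hA] := upart_ex P; rewrite hA in_set2.
case/orP => /eqP ->; apply: val_inj; rewrite /= hA //.
by rewrite setCK setUC.
Qed.

Lemma rep_mkP A : rep (mkP A) = A \/ rep (mkP A) = ~: A.
Proof. by have := rep_in (mkP A); rewrite /= in_set2 => /orP [] /eqP; [left|right]. Qed.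

Lemma mkP_inj A B : mkP A = mkP B -> B = A \/ B = ~: A.
Proof.
move/(congr1 val) => /= h; have : B \in [set A; ~: A] by rewrite h set21.
by rewrite in_set2 => /orP [] /eqP; [left|right].
Qed.

Lemma card2I (i j : V) (A : {set V}) : i != j ->
  (#|[set i; j] :&: A| == 1%N) = ((i \in A) != (j \in A)).
Proof.
move=> nij; case hi: (i \in A); case hj: (j \in A).
- rewrite (setIidPl _); first by rewrite cards2 nij.
  by apply/subsetP => x; rewrite in_set2 => /orP [] /eqP ->.
- suff -> : [set i; j] :&: A = [set i] by rewrite cards1.
  apply/setP => x; rewrite !inE; case: (eqVneq x i) => [->|_]; first by rewrite hi.
  by case: (eqVneq x j) => [->|] //; rewrite hj.
- suff -> : [set i; j] :&: A = [set j] by rewrite cards1.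
  apply/setP => x; rewrite !inE; case: (eqVneq x i) => [->|_]; first by rewrite hi (negbTE nij).
  by case: (eqVneq x j) => [->|] //; rewrite hj.
- suff -> : [set i; j] :&: A = set0 by rewrite cards0.
  apply/setP => x; rewrite !inE; case: (eqVneq x i) => [->|_]; first by rewrite hi.
  by case: (eqVneq x j) => [->|] //; rewrite hj.
Qed.

Lemma cutsE (e : rel V) (E : edgeT e) (A : {set V}) i j :
  val E = [set i; j] -> i != j -> cuts (mkP A) E = ((i \in A) != (j \in A)).
Proof.
move=> hE nij; rewrite /cuts hE.
apply/existsP/idP => [[B /andP [] /=]|h].
  rewrite in_set2 => /orP [] /eqP -> ; rewrite card2I //.
  by rewrite !inE; case: (i \in A); case: (j \in A).
by exists A; rewrite /= set21 card2I.
Qed.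

Lemma cuts_mkP (e : rel V) (E : edgeT e) (A B : {set V}) :
  mkP A = mkP B -> cuts (mkP A) E = cuts (mkP B) E.
Proof. by move=> ->. Qed.

Lemma edgeP (e : rel V) (E : edgeT e) : exists i j, e i j /\ val E = [set i; j].
Proof.
case: E => E /= /existsP [i /existsP [j /andP [h /eqP ->]]].
by exists i, j.
Qed.

Lemma card_upart (v0 : V) : #|{: upart V}| = (2 ^ (#|V|.-1))%N.
Proof.
pose S := [set A : {set V} | v0 \in A].
have injS : {in S &, injective mkP}.
  move=> A B; rewrite !inE => hA hB /mkP_inj [] // hBA.
  by move: hB; rewrite hBA inE hA.
have imS : [set: upart V] = mkP @: S.
  apply/setP => P; rewrite inE; symmetry; apply/imsetP.
  case hv: (v0 \in rep P).
    by exists (rep P); rewrite ?inE // -upartE.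
  by exists (~: rep P); rewrite ?inE ?hv // mkPC -upartE.
have -> : #|{: upart V}| = #|[set: upart V]| by rewrite cardsT.
rewrite imS card_in_imset //.
have -> : S = (fun B => v0 |: B) @: powerset [set~ v0].
  apply/setP => A; rewrite inE; apply/idP/imsetP => [hA|[B _ ->]].
    exists (A :\ v0); last by rewrite setD1K.
    by rewrite inE; apply/subsetP => x; rewrite !inE => /andP [].
  by rewrite setU11.
rewrite card_in_imset ?card_powerset ?cardsC1 //.
move=> B C; rewrite !inE => hB hC h.
have sB : v0 \notin B by apply/negP => /(subsetP hB); rewrite !inE eqxx.
have sC : v0 \notin C by apply/negP => /(subsetP hC); rewrite !inE eqxx.
by rewrite -(setU1K sB) -(setU1K sC) h.
Qed.

End UP.

Lemma cut_image_ext (K : fieldType) (V : finType) (e : rel V) (P Q : upart V) :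
  (forall E : edgeT e, cuts P E = cuts Q E) -> cut_image K e P = cut_image K e Q.
Proof. by move=> h; apply: eq_bigr => E _; rewrite h. Qed.

Lemma bij_of (A B : finType) (h : A -> B) : injective h ->
  (forall y, exists x, h x = y) -> bijective h.
Proof.
move=> hi hs.
have hc : forall y, y \in codom h by move=> y; have [x <-] := hs y; exact: codom_f.
exists (fun y => iinv (hc y)) => [x|y]; last exact: f_iinv.
by apply: hi; rewrite f_iinv.
Qed.

Section Graphs.
Variables (V1 V2 : finType) (e1 : rel V1) (e2 : rel V2).
Hypotheses (irr1 : irreflexive e1) (irr2 : irreflexive e2).
Variables (u1 : V1) (u2 : V2).

Local Notation W := (V1 + V2)%type.
Local Notation eU := (dunion_rel e1 e2).
Local Notation Z := (zs_vert V1 u2).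
Local Notation eZ := (zs_rel e1 e2 u1 u2).

Lemma glue_neq x : glue u1 u2 x != inr u2.
Proof. by rewrite /glue; case: (eqVneq x (inr u2)). Qed.

Definition gl (x : W) : Z := exist _ (glue u1 u2 x) (glue_neq x).

Lemma glueE x : x != inr u2 -> glue u1 u2 x = x.
Proof. by rewrite /glue => /negbTE ->. Qed.

Lemma gl_val (y : Z) : gl (val y) = y.
Proof. by apply: val_inj; rewrite /= glueE //; exact: (valP y). Qed.

Lemma gl_inl a : val (gl (inl a)) = inl a.
Proof. by rewrite /= glueE. Qed.

Lemma gl_inr c : c != u2 -> val (gl (inr c)) = inr c.
Proof. by move=> h; rewrite /= glueE. Qed.

Lemma gl_u2 : val (gl (inr u2)) = inl u1.
Proof. by rewrite /= /glue eqxx. Qed.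

Lemma gl_inl_eq a b : (gl (inl a) == gl (inl b)) = (a == b).
Proof.
apply/eqP/eqP => [/(congr1 val)|-> //]; rewrite !gl_inl; by case.
Qed.

Lemma gl_inr_eq c d : (gl (inr c) == gl (inr d)) = (c == d).
Proof.
apply/eqP/eqP => [/(congr1 val)|-> //].
case: (eqVneq c u2) => [->|hc]; case: (eqVneq d u2) => [->|hd] //.
- by rewrite gl_u2 gl_inr.
- by rewrite gl_u2 gl_inr.
- by rewrite !gl_inr // => -[].
Qed.

Lemma eU_neq i j : eU i j -> (i != j) && (gl i != gl j).
Proof.
case: i => [a|c]; case: j => [b|d] //= h.
  have nab : a != b by apply: contraTneq h => ->; rewrite irr1.
  by rewrite gl_inl_eq nab.
have ncd : c != d by apply: contraTneq h => ->; rewrite irr2.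
by rewrite gl_inr_eq ncd.
Qed.

Lemma edgeU (E : edgeT eU) :
  (exists a b, e1 a b /\ val E = [set inl a; inl b]) \/
  (exists c d, e2 c d /\ val E = [set inr c; inr d]).
Proof.
have [i [j [h ->]]] := edgeP E.
case: i h => [a|c]; case: j => [b|d] //= h; [left; by exists a, b|right; by exists c, d].
Qed.

Lemma imset2 (A B : finType) (f : A -> B) (i j : A) :
  f @: [set i; j] = [set f i; f j].
Proof. by rewrite imsetU1 imset_set1. Qed.

Lemma hE_proof (E : edgeT eU) :
  [exists i, exists j, eZ i j && (gl @: val E == [set i; j])].
Proof.
have [i [j [h hE]]] := edgeP E.
apply/existsP; exists (gl i); apply/existsP; exists (gl j).
rewrite hE imset2 eqxx andbT; apply/existsP; exists (i, j) => /=.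
by rewrite h !eqxx.
Qed.

Definition hE (E : edgeT eU) : edgeT eZ := exist _ (gl @: val E) (hE_proof E).

Definition isR (x : W) := if x is inr _ then true else false.
Definition decode (S0 : {set Z}) : {set W} :=
  if [exists y in S0, isR (val y)] then [set x | isR x && (gl x \in S0)]
  else [set x | ~~ isR x && (gl x \in S0)].

Lemma decodeK (E : edgeT eU) : decode (gl @: val E) = val E.
Proof.
rewrite /decode; case: (edgeU E) => [[a [b [h ->]]]|[c [d [h ->]]]].
  rewrite imset2 (_ : [exists y in _, _] = false); last first.
    apply/negbTE/existsP => -[y /andP []]; rewrite in_set2.
    by case/orP => /eqP ->; rewrite gl_inl.
  apply/setP => -[x|x]; rewrite !inE //=.
have ncd : c != d by case: (eqVneq c d) h => // ->; rewrite irr2.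
rewrite imset2 (_ : [exists y in _, _] = true); last first.
  apply/existsP; case: (eqVneq c u2) => [hc|hc].
    exists (gl (inr d)); rewrite set22 andTb gl_inr //.
    by rewrite -hc eq_sym.
  by exists (gl (inr c)); rewrite set21 andTb gl_inr.
apply/setP => -[x|x]; rewrite !inE //=.
by rewrite !gl_inr_eq.
Qed.

Lemma hE_inj : injective hE.
Proof.
move=> E E' /(congr1 val) /= h; apply: val_inj.
by rewrite -decodeK h decodeK.
Qed.

Lemma hE_surj (E0 : edgeT eZ) : exists E, hE E = E0.
Proof.
have [a [b [/existsP [p /and3P [hp /eqP ha /eqP hb]] hE0]]] := edgeP E0.
have pr : [exists i, exists j, eU i j && ([set p.1; p.2] == [set i; j])].
  by apply/existsP; exists p.1; apply/existsP; exists p.2; rewrite hp eqxx.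
exists (Sub [set p.1; p.2] pr : edgeT eU); apply: val_inj; rewrite /= hE0 imset2.
have -> : gl p.1 = a by apply: val_inj.
by have -> : gl p.2 = b by apply: val_inj.
Qed.

Lemma hE_bij : bijective hE.
Proof. exact: bij_of hE_inj hE_surj. Qed.

Definition sigP (P0 : upart Z) : upart W := mkP (gl @^-1: rep P0).

Lemma sigP_mkP A : sigP (mkP A) = mkP (gl @^-1: A).
Proof.
rewrite /sigP; case: (rep_mkP A) => -> //.
by rewrite preimsetC mkPC.
Qed.

Lemma cuts_sig P0 (E : edgeT eU) : cuts (sigP P0) E = cuts P0 (hE E).
Proof.
have -> : cuts P0 (hE E) = cuts (mkP (rep P0)) (hE E) by rewrite -upartE.
have [i [j [h hv]]] := edgeP E.
have /andP [nij ngij] := eU_neq h.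
rewrite /sigP (cutsE _ hv nij) (@cutsE _ _ (hE E) _ (gl i) (gl j)) //.
  by rewrite !inE.
by rewrite /= hv imset2.
Qed.

Definition ss (k : upart W) := (inl u1 \in rep k) == (inr u2 \in rep k).

Lemma ss_mkP A : ss (mkP A) = ((inl u1 \in A) == (inr u2 \in A)).
Proof.
rewrite /ss; case: (rep_mkP A) => -> //; rewrite !inE.
by case: (inl u1 \in A); case: (inr u2 \in A).
Qed.

Definition flipS (A : {set W}) : {set W} :=
  [set x | if x is inl _ then x \in A else x \notin A].

Lemma flipSC A : flipS (~: A) = ~: flipS A.
Proof. by apply/setP => -[x|x]; rewrite !inE. Qed.

Lemma flipSK A : flipS (flipS A) = A.
Proof. by apply/setP => -[x|x]; rewrite !inE ?negbK. Qed.

Definition flipP (k : upart W) : upart W := mkP (flipS (rep k)).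

Lemma flipP_mkP A : flipP (mkP A) = mkP (flipS A).
Proof. by rewrite /flipP; case: (rep_mkP A) => -> //; rewrite flipSC mkPC. Qed.

Lemma flipPK : cancel flipP flipP.
Proof. by move=> k; rewrite [flipP k]/flipP flipP_mkP flipSK -upartE. Qed.

Lemma ss_flip k : ss (flipP k) = ~~ ss k.
Proof.
rewrite /flipP ss_mkP /ss !inE.
by case: (inl u1 \in rep k); case: (inr u2 \in rep k).
Qed.

Lemma cuts_flip k (E : edgeT eU) : cuts (flipP k) E = cuts k E.
Proof.
rewrite {2}(upartE k) /flipP.
case: (edgeU E) => [[a [b [h hv]]]|[c [d [h hv]]]].
  have /andP [nab _] := eU_neq (h : eU (inl a) (inl b)).
  by rewrite !(cutsE _ hv nab) !inE.
have /andP [ncd _] := eU_neq (h : eU (inr c) (inr d)).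
rewrite !(cutsE _ hv ncd) !inE.
by case: (inr c \in rep k); case: (inr d \in rep k).
Qed.

Lemma ss_sig P0 : ss (sigP P0).
Proof.
rewrite /sigP ss_mkP !inE.
by have -> : gl (inr u2) = gl (inl u1) by apply: val_inj; rewrite gl_u2 gl_inl.
Qed.

Lemma preim_gl_inj (A B : {set Z}) : gl @^-1: A = gl @^-1: B -> A = B.
Proof.
move=> hAB; apply/setP => y.
have := congr1 (fun S : {set W} => val y \in S) hAB; rewrite !inE gl_val; done.
Qed.

Lemma sigP_inj : injective sigP.
Proof.
move=> P P'; rewrite (upartE P) (upartE P') !sigP_mkP.
move/mkP_inj => [h|h].
  by rewrite (preim_gl_inj h).
by rewrite -preimsetC in h; rewrite (preim_gl_inj h) mkPC.
Qed.

Definition unsigP (k : upart W) : upart Z :=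
  mkP [set y : Z | val y \in rep (if ss k then k else flipP k)].

Lemma sig_unsig k : sigP (unsigP k) = if ss k then k else flipP k.
Proof.
set k' := if ss k then k else flipP k.
have hs : ss k'.
  by rewrite /k'; case: ifP => // /negbT h; rewrite ss_flip.
rewrite /unsigP sigP_mkP [RHS]upartE; congr mkP.
apply/setP => x; rewrite !inE /=.
case: (eqVneq x (inr u2)) => [->|hx]; last by rewrite glueE.
by rewrite /glue eqxx; move: hs; rewrite /ss => /eqP.
Qed.

Lemma cut_sig_unsig (K : fieldType) k :
  cut_image K eU (sigP (unsigP k)) = cut_image K eU k.
Proof.
rewrite sig_unsig; case: ifP => // _; apply: cut_image_ext => E.
exact: cuts_flip.
Qed.

Definition comb (A1 : {set V1}) (A2 : {set V2}) : {set W} :=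
  [set x | match x with inl a => a \in A1 | inr b => b \in A2 end].

Definition liftP (P : upart V1) (Q : upart V2) : upart W := mkP (comb (rep P) (rep Q)).
Definition res1 (k : upart W) : upart V1 := mkP (inl @^-1: rep k).
Definition res2 (k : upart W) : upart V2 := mkP (inr @^-1: rep k).

Lemma cuts_res k (E : edgeT eU) : cuts (liftP (res1 k) (res2 k)) E = cuts k E.
Proof.
have -> : cuts k E = cuts (mkP (rep k)) E by rewrite -upartE.
rewrite /liftP.
case: (edgeU E) => [[a [b [h hv]]]|[c [d [h hv]]]].
  have /andP [nab _] := eU_neq (h : eU (inl a) (inl b)).
  rewrite !(cutsE _ hv nab) !inE /res1.
  by case: (rep_mkP (inl @^-1: rep k)) => ->; rewrite !inE //;
     case: (inl a \in rep k); case: (inl b \in rep k).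
have /andP [ncd _] := eU_neq (h : eU (inr c) (inr d)).
rewrite !(cutsE _ hv ncd) !inE /res2.
by case: (rep_mkP (inr @^-1: rep k)) => ->; rewrite !inE //;
   case: (inr c \in rep k); case: (inr d \in rep k).
Qed.

Lemma e1toU_proof (E : edgeT e1) :
  [exists i, exists j, eU i j && (inl @: val E == [set i; j])].
Proof.
have [a [b [h ->]]] := edgeP E.
by apply/existsP; exists (inl a); apply/existsP; exists (inl b); rewrite imset2 /= h eqxx.
Qed.
Lemma e2toU_proof (E : edgeT e2) :
  [exists i, exists j, eU i j && (inr @: val E == [set i; j])].
Proof.
have [a [b [h ->]]] := edgeP E.
by apply/existsP; exists (inr a); apply/existsP; exists (inr b); rewrite imset2 /= h eqxx.
Qed.

Definition e1toU (E : edgeT e1) : edgeT eU := Sub (inl @: val E) (e1toU_proof E).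
Definition e2toU (E : edgeT e2) : edgeT eU := Sub (inr @: val E) (e2toU_proof E).

Definition sumE (x : (edgeT e1 + edgeT e2)%type) : edgeT eU :=
  match x with inl E => e1toU E | inr E => e2toU E end.

Lemma sumE_bij : bijective sumE.
Proof.
apply: bij_of.
  have i1 : injective (fun A : {set V1} => inl @: A : {set W}).
    by apply: imset_inj => a b [].
  have i2 : injective (fun A : {set V2} => inr @: A : {set W}).
    by apply: imset_inj => a b [].
  move=> [E|E] [E'|E'] /(congr1 val) /= h.
  - by congr inl; apply: val_inj; exact: i1.
  - have [a [b [_ ha]]] := edgeP E.
    have : (inl a : W) \in inl @: val E by apply: imset_f; rewrite ha set21.
    by rewrite h => /imsetP [].
  - have [a [b [_ ha]]] := edgeP E.
    have : (inr a : W) \in inr @: val E by apply: imset_f; rewrite ha set21.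
    by rewrite h => /imsetP [].
  - by congr inr; apply: val_inj; exact: i2.
move=> E; case: (edgeU E) => [[a [b [h hv]]]|[c [d [h hv]]]].
  have pr : [exists i, exists j, e1 i j && ([set a; b] == [set i; j])].
    by apply/existsP; exists a; apply/existsP; exists b; rewrite h eqxx.
  exists (inl (Sub [set a; b] pr : edgeT e1)); apply: val_inj.
  by rewrite /= hv imset2.
have pr : [exists i, exists j, e2 i j && ([set c; d] == [set i; j])].
  by apply/existsP; exists c; apply/existsP; exists d; rewrite h eqxx.
exists (inr (Sub [set c; d] pr : edgeT e2)); apply: val_inj.
by rewrite /= hv imset2.
Qed.

Lemma cuts_lift1 P Q (E : edgeT e1) : cuts (liftP P Q) (e1toU E) = cuts P E.
Proof.
have [a [b [h hv]]] := edgeP E.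
have nab : a != b by apply: contraTneq h => ->; rewrite irr1.
have hv' : val (e1toU E) = [set inl a; inl b] by rewrite /= hv imset2.
rewrite /liftP (cutsE _ hv' _); last by [].
have -> : cuts P E = cuts (mkP (rep P)) E by rewrite -upartE.
by rewrite (cutsE _ hv nab) !inE.
Qed.

Lemma cuts_lift2 P Q (E : edgeT e2) : cuts (liftP P Q) (e2toU E) = cuts Q E.
Proof.
have [a [b [h hv]]] := edgeP E.
have nab : a != b by apply: contraTneq h => ->; rewrite irr2.
have hv' : val (e2toU E) = [set inr a; inr b] by rewrite /= hv imset2.
rewrite /liftP (cutsE _ hv' _); last by [].
have -> : cuts Q E = cuts (mkP (rep Q)) E by rewrite -upartE.
by rewrite (cutsE _ hv nab) !inE.
Qed.

End Graphs.
Lemma ig_hom2 (R T : comNzRingType) (S : R -> Prop) (F : R -> T) x :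
  {morph F : a b / a + b} -> {morph F : a b / a * b} -> F 0 = 0 ->
  (forall y, S y -> F y = 0) -> ideal_gen S x -> F x = 0.
Proof.
move=> FD FM F0 h [n [c [g [Sg ->]]]]; rewrite (big_morph F FD F0) big1 // => i _.
by rewrite FM (h _ (Sg i)) mulr0.
Qed.

Lemma Xhomog (K : fieldType) n (i : 'I_n) : ('X_i : {mpoly K[n]}) \is 1.-homog.
Proof. by rewrite dhomogX; apply/eqP; exact: mdeg1. Qed.

Section Main.
Variables (K : fieldType) (V1 V2 : finType) (e1 : rel V1) (e2 : rel V2).
Hypotheses (irr1 : irreflexive e1) (irr2 : irreflexive e2).
Variables (u1 : V1) (u2 : V2).

Local Notation W := (V1 + V2)%type.
Local Notation eU := (dunion_rel e1 e2).
Local Notation Z := (zs_vert V1 u2).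
Local Notation eZ := (zs_rel e1 e2 u1 u2).
Local Notation MU := #|{: upart W}|.
Local Notation M0 := #|{: upart Z}|.
Local Notation sigP := (@sigP V1 V2 u1 u2).
Local Notation hE := (@hE V1 V2 e1 e2 u1 u2).

Lemma hE_codom (E0 : edgeT eZ) : E0 \in codom hE.
Proof. by have [E <-] := hE_surj E0; exact: codom_f. Qed.

Definition hEi (E0 : edgeT eZ) : edgeT eU := iinv (hE_codom E0).
Lemma hEiK E0 : hE (hEi E0) = E0. Proof. exact: f_iinv. Qed.
Lemma hEK E : hEi (hE E) = E.
Proof. apply: (hE_inj irr2); exact: hEiK. Qed.

Definition gZ (v : 'I_#|{: edgeT eZ + edgeT eZ}|) : 'I_#|{: edgeT eU + edgeT eU}| :=
  enum_rank (match enum_val v with inl E => inl (hEi E) | inr E => inr (hEi E) end).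
Definition gZ' (v : 'I_#|{: edgeT eU + edgeT eU}|) : 'I_#|{: edgeT eZ + edgeT eZ}| :=
  enum_rank (match enum_val v with inl E => inl (hE E) | inr E => inr (hE E) end).
Lemma gZK : cancel gZ gZ'.
Proof.
move=> v; rewrite /gZ' /gZ enum_rankK.
by case hv: (enum_val v) => [E|E]; rewrite hEiK -hv enum_valK.
Qed.

Lemma vmap_prod n m (f : 'I_n -> 'I_m) (I : finType) (F : I -> {mpoly K[n]}) :
  vmap f (\prod_(i : I) F i) = \prod_(i : I) vmap f (F i).
Proof. exact: (big_morph _ (@vmapM K n m f) (@vmap1 K n m f)). Qed.

Lemma psi_cut P0 : vmap gZ (cut_image K eZ P0) = cut_image K eU (sigP P0).
Proof.
rewrite /cut_image vmap_prod.
rewrite (reindex hE); last exact/onW_bij/(hE_bij e1 irr2).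
apply: eq_bigr => E _.
rewrite (cuts_sig irr1 irr2); case: (cuts P0 (hE E)).
  by rewrite /Xv vmapX /gZ enum_rankK hEK.
by rewrite /Xv vmapX /gZ enum_rankK hEK.
Qed.

Definition sigma (i : 'I_M0) : 'I_MU := enum_rank (sigP (enum_val i)).

Lemma sigma_inj : injective sigma.
Proof.
move=> i j /enum_rank_inj /sigP_inj /enum_val_inj; done.
Qed.

Lemma cutmap_sig q : cut_map K eU (vmap sigma q) = vmap gZ (cut_map K eZ q).
Proof.
rewrite /cut_map vmap_comp comp_vmap; congr (_ \mPo _); apply: eq_mktuple => i.
by rewrite !tnth_mktuple /sigma enum_rankK psi_cut.
Qed.

Lemma cutmapX (k : upart W) : cut_map K eU (Xv K k) = cut_image K eU k.
Proof. by rewrite /cut_map /Xv comp_mpolyXU -tnth_nth tnth_mktuple enum_rankK. Qed.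

Lemma cut_flip k : cut_image K eU (flipP k) = cut_image K eU k.
Proof. by apply: cut_image_ext => E; exact: (cuts_flip irr1 irr2 u1 u2). Qed.

Lemma card_Z : #|{: Z}| = (#|V1| + #|V2|).-1.
Proof.
rewrite card_sig -card_sum.
have -> : #|[pred x : W | x != inr u2]| = #|predC1 (inr u2 : W)| by apply: eq_card.
by rewrite cardC1.
Qed.

Lemma hN : (2 ^ (#|V1| + #|V2| - 2))%N = M0.
Proof.
rewrite (card_upart (gl u1 u2 (inl u1))) card_Z.
by congr (2 ^ _)%N; rewrite -subn1 -subn1 -subnDA.
Qed.

Local Notation N := (2 ^ (#|V1| + #|V2| - 2))%N.

Definition P_ (i : 'I_N) : upart Z := enum_val (cast_ord hN i).
Definition gen (i : 'I_N) : {mpoly K[MU]} :=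
  Xv K (sigP (P_ i)) - Xv K (flipP (sigP (P_ i))).

Definition ev (k0 : upart W) (p : {mpoly K[MU]}) : K :=
  meval (fun v => if v == enum_rank k0 then 1 else 0) p.

Lemma evX k0 k : ev k0 (Xv K k) = (k == k0)%:R.
Proof.
rewrite /ev /Xv mevalXU (inj_eq enum_rank_inj).
by case: (k == k0).
Qed.

Lemma P_inj : injective P_.
Proof. by move=> i j /enum_val_inj /cast_ord_inj. Qed.

Lemma ev_gen i j : ev (flipP (sigP (P_ j))) (gen i) = - (i == j)%:R.
Proof.
rewrite /ev mevalB -!/(ev _ _) !evX.
have -> : (sigP (P_ i) == flipP (sigP (P_ j))) = false.
  apply/negbTE/eqP => h; have := ss_sig u1 (P_ i); rewrite h ss_flip ss_sig.
  done.
rewrite (inj_eq (can_inj (@flipPK V1 V2))) (inj_eq (@sigP_inj V1 V2 u1 u2)).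
by rewrite (inj_eq P_inj) sub0r.
Qed.

Definition Lid := ideal_gen (fun q => exists i, q = gen i).

Lemma ev_morph k0 :
  {morph ev k0 : a b / a + b} /\ {morph ev k0 : a b / a * b} /\ ev k0 0 = 0.
Proof. by split; [move=> a b; exact: mevalD|split; [move=> a b; exact: mevalM|exact: meval0]]. Qed.

Lemma min_gen : min_gen_linear Lid N.
Proof.
exists gen; split; [|split; [|split]].
- move=> i j h; have := congr1 (ev (flipP (sigP (P_ j)))) h.
  rewrite !ev_gen eqxx; case: (eqVneq i j) => // _ /eqP.
  by rewrite /= oppr0 eq_sym oppr_eq0 oner_eq0.
- move=> i; rewrite /gen /Xv; apply: rpredB; exact: Xhomog.
- by [].
- move=> j H.
  have hj : Lid (gen j) by apply: ig_gen; exists j.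
  have [FD [FM F0]] := ev_morph (flipP (sigP (P_ j))).
  have : ev (flipP (sigP (P_ j))) (gen j) = 0.
    apply: (ig_hom2 FD FM F0 _ (proj2 (H (gen j)) hj)) => y [i [hij ->]].
    by rewrite ev_gen (negbTE hij) /= oppr0.
  by rewrite ev_gen eqxx => /eqP; rewrite /= oppr_eq0 oner_eq0.
Qed.

Lemma vmap0 n m (f : 'I_n -> 'I_m) : vmap (K:=K) f 0 = 0.
Proof. exact: comp_mpoly0. Qed.

Definition r (k : 'I_MU) : 'I_M0 := enum_rank (unsigP u1 u2 (enum_val k)).

Lemma cmD : {morph cut_map K eU : a b / a + b}.
Proof. by move=> a b; exact: rmorphD. Qed.
Lemma cmM : {morph cut_map K eU : a b / a * b}.
Proof. by move=> a b; exact: rmorphM. Qed.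
Lemma cm0 : cut_map K eU 0 = 0.
Proof. exact: rmorph0. Qed.

Lemma part1_eq : ideal_eq (cut_ideal K eU)
  (ideal_add (ideal_image (vmap (K:=K) sigma) (cut_ideal K eZ)) Lid).
Proof.
move=> p; split.
- move=> hp.
  pose t := [tuple ('X_(sigma (r k)) : {mpoly K[MU]}) | k < MU].
  have ht : vmap sigma (vmap r p) = p \mPo t.
    rewrite [LHS]vmapE vmap_comp; congr (_ \mPo _); apply: eq_mktuple => k.
    by rewrite tnth_mktuple.
  exists (vmap sigma (vmap r p)), (p - vmap sigma (vmap r p)).
  split; [|split]; last by rewrite addrC subrK.
  + apply: ig_gen; exists (vmap r p); split => //.
    rewrite /cut_ideal -(vmap_inj gZK (cut_map K eZ (vmap r p))) -cutmap_sig ht.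
    have -> : cut_map K eU (p \mPo t) = cut_map K eU p.
      rewrite /cut_map comp_comp; congr (_ \mPo _); apply: eq_mktuple => k.
      rewrite tnth_mktuple comp_mpolyXU -tnth_nth tnth_mktuple /sigma enum_rankK.
      by rewrite /r enum_rankK (cut_sig_unsig irr1 irr2).
    by rewrite hp vmap0.
  + rewrite ht; apply: (ig_sub _ (ig_cong t p)) => y [k ->]; rewrite tnth_mktuple.
    rewrite /sigma /r enum_rankK sig_unsig.
    case hs: (ss u1 u2 (enum_val k)).
      by rewrite enum_valK subrr; exact: ig0.
    set P0 := unsigP u1 u2 (enum_val k).
    have hP : sigP P0 = flipP (enum_val k) by rewrite /P0 sig_unsig hs.
    pose j := cast_ord (esym hN) (enum_rank P0).
    have hPj : P_ j = P0 by rewrite /P_ /j cast_ordKV enum_rankK.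
    have -> : 'X_k - 'X_(enum_rank (flipP (enum_val k))) = - gen j.
      by rewrite /gen hPj hP flipPK /Xv enum_valK opprB.
    by apply: igN; apply: ig_gen; exists j.
- move=> [a [b [ha [hb ->]]]].
  have FD := cmD; have FM := cmM; have F0 := cm0.
  rewrite /cut_ideal FD.
  rewrite (ig_hom2 FD FM F0 _ ha); last first.
    by move=> y [q [hq ->]]; rewrite cutmap_sig hq vmap0.
  rewrite (ig_hom2 FD FM F0 _ hb) ?addr0 //.
  move=> y [i ->]; rewrite /gen.
  have cmB : forall a b, cut_map K eU (a - b) = cut_map K eU a - cut_map K eU b.
    by move=> a' b'; exact: comp_mpolyB.
  by rewrite cmB !cutmapX cut_flip subrr.
Qed.


Local Notation T1 := (upart V1).
Local Notation T2 := (upart V2).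

Definition g1 (v : 'I_#|{: edgeT e1 + edgeT e1}|) : 'I_#|{: edgeT eU + edgeT eU}| :=
  enum_rank (match enum_val v with inl E => inl (e1toU e2 E) | inr E => inr (e1toU e2 E) end).
Definition g2 (v : 'I_#|{: edgeT e2 + edgeT e2}|) : 'I_#|{: edgeT eU + edgeT eU}| :=
  enum_rank (match enum_val v with inl E => inl (e2toU e1 E) | inr E => inr (e2toU e1 E) end).

Lemma sumE_inj : injective (@sumE V1 V2 e1 e2).
Proof. exact: bij_inj (sumE_bij e1 e2). Qed.

Lemma e1toU_inj : injective (e1toU (e1:=e1) e2).
Proof. by move=> E E' h; have := @sumE_inj (inl E) (inl E') h => -[]. Qed.
Lemma e2toU_inj : injective (e2toU e1 (e2:=e2)).
Proof. by move=> E E' h; have := @sumE_inj (inr E) (inr E') h => -[]. Qed.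

Lemma g1_inj : injective g1.
Proof.
move=> v w /enum_rank_inj.
case hv: (enum_val v) => [E|E]; case hw: (enum_val w) => [E'|E'] //= h.
  have h' := congr1 (fun x => match x with inl y => y | inr y => y end) h.
  by apply: enum_val_inj; rewrite hv hw (e1toU_inj h').
have h' := congr1 (fun x => match x with inl y => y | inr y => y end) h.
by apply: enum_val_inj; rewrite hv hw (e1toU_inj h').
Qed.
Lemma g2_inj : injective g2.
Proof.
move=> v w /enum_rank_inj.
case hv: (enum_val v) => [E|E]; case hw: (enum_val w) => [E'|E'] //= h.
  have h' := congr1 (fun x => match x with inl y => y | inr y => y end) h.
  by apply: enum_val_inj; rewrite hv hw (e2toU_inj h').
have h' := congr1 (fun x => match x with inl y => y | inr y => y end) h.
by apply: enum_val_inj; rewrite hv hw (e2toU_inj h').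
Qed.
Lemma g12 i j : g1 i != g2 j.
Proof.
apply/negP => /eqP /enum_rank_inj.
case: (enum_val i) => [E|E]; case: (enum_val j) => [E'|E'] //= h.
  have h' := congr1 (fun x => match x with inl y => y | inr y => y end) h.
  by have := @sumE_inj (inl E) (inr E') h'.
have h' := congr1 (fun x => match x with inl y => y | inr y => y end) h.
by have := @sumE_inj (inl E) (inr E') h'.
Qed.

Lemma lift_cut P Q : vmap g1 (cut_image K e1 P) * vmap g2 (cut_image K e2 Q) =
  cut_image K eU (liftP P Q).
Proof.
rewrite /cut_image !vmap_prod.
rewrite [RHS](reindex (@sumE V1 V2 e1 e2)); last exact/onW_bij/sumE_bij.
rewrite big_sumType /=; congr (_ * _); apply: eq_bigr => E _.
  rewrite (cuts_lift1 e2 irr1); case: (cuts P E);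
  by rewrite /Xv vmapX /g1 enum_rankK.
rewrite (cuts_lift2 e1 irr2); case: (cuts Q E);
by rewrite /Xv vmapX /g2 enum_rankK.
Qed.

Definition lb (i : 'I_#|{: T1 * T2}|) : {mpoly K[MU]} :=
  Xv K (liftP (enum_val i).1 (enum_val i).2).

Definition tP : #|{: T1 + T2}|.-tuple {mpoly K[#|{: edgeT eU + edgeT eU}|]} :=
  [tuple (match enum_val v with inl P => vmap g1 (cut_image K e1 P)
          | inr Q => vmap g2 (cut_image K e2 Q) end) | v < #|{: T1 + T2}|].

Definition fx (i : 'I_#|{: T1}|) : 'I_#|{: T1 + T2}| := enum_rank (inl (enum_val i) : (T1 + T2)%type).
Definition fy (i : 'I_#|{: T2}|) : 'I_#|{: T1 + T2}| := enum_rank (inr (enum_val i) : (T1 + T2)%type).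
Definition t1 := [tuple cut_image K e1 (enum_val i) | i < #|{: T1}|].
Definition t2 := [tuple cut_image K e2 (enum_val i) | i < #|{: T2}|].

Lemma tP1 i : tnth tP (fx i) = vmap g1 (tnth t1 i).
Proof. by rewrite /tP /fx /t1 !tnth_mktuple enum_rankK. Qed.
Lemma tP2 i : tnth tP (fy i) = vmap g2 (tnth t2 i).
Proof. by rewrite /tP /fy /t2 !tnth_mktuple enum_rankK. Qed.

Lemma cover v : (exists i, fx i = v) \/ (exists j, fy j = v).
Proof.
case hv: (enum_val v) => [P|Q].
  by left; exists (enum_rank P); rewrite /fx enum_rankK -hv enum_valK.
by right; exists (enum_rank Q); rewrite /fy enum_rankK -hv enum_valK.
Qed.

Lemma key f : cut_map K eU (f \mPo [tuple lb i | i < #|{: T1 * T2}|]) =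
  segre_map f \mPo tP.
Proof.
rewrite /cut_map /segre_map !comp_comp; congr (_ \mPo _); apply: eq_mktuple => i.
rewrite !tnth_mktuple -/(cut_map K eU _) /lb cutmapX rmorphM /=.
rewrite /Xv !comp_mpolyXU -!tnth_nth /tP !tnth_mktuple !enum_rankK.
exact: esym (lift_cut _ _).
Qed.

Lemma part2 :
  exists lb : 'I_#|{: upart V1 * upart V2}| -> {mpoly K[#|{: upart (V1 + V2)}|]},
     (forall i, lb i \is 1.-homog) /\
     (forall f : {mpoly K[#|{: upart V1 * upart V2}|]},
        cut_ideal K (dunion_rel e1 e2) (f \mPo [tuple lb i | i < _])
        <-> segre_ideal K e1 e2 f) /\
     (forall k : 'I_#|{: upart (V1 + V2)}|,
        exists f : {mpoly K[#|{: upart V1 * upart V2}|]},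
          f \is 1.-homog /\
          cut_ideal K (dunion_rel e1 e2) ('X_k - (f \mPo [tuple lb i | i < _]))).
Proof.
exists lb; split; [|split].
- by move=> i; rewrite /lb /Xv; exact: Xhomog.
- move=> f; rewrite /cut_ideal key; split.
  + move=> h.
    exact: (tensor cover g1_inj g2_inj g12 tP1 tP2 h).
  + move=> [a [b [ha [hb ->]]]].
    have FD : {morph comp_mpoly tP : x y / x + y} by move=> x y; exact: rmorphD.
    have FM : {morph comp_mpoly tP : x y / x * y} by move=> x y; exact: rmorphM.
    have F0 : comp_mpoly tP 0 = 0 by exact: rmorph0.
    rewrite FD (ig_hom2 FD FM F0 _ ha); last first.
      move=> y [q [hq ->]]; rewrite (Phi1 tP1).
      by move: hq; rewrite /cut_ideal /cut_map => ->; rewrite vmap0.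
    rewrite (ig_hom2 FD FM F0 _ hb) ?addr0 //.
    move=> y [q [hq ->]]; rewrite (Phi2 tP2).
    by move: hq; rewrite /cut_ideal /cut_map => ->; rewrite vmap0.
- move=> k.
  exists 'X_(enum_rank (res1 (enum_val k), res2 (enum_val k))); split.
    exact: Xhomog.
  rewrite comp_mpolyXU -tnth_nth tnth_mktuple /lb enum_rankK /=.
  rewrite /cut_ideal.
  have cmB : forall a b, cut_map K eU (a - b) = cut_map K eU a - cut_map K eU b.
    by move=> a' b'; exact: comp_mpolyB.
  have -> : ('X_k : {mpoly K[MU]}) = Xv K (enum_val k) by rewrite /Xv enum_valK.
  rewrite cmB !cutmapX.
  have -> : cut_image K eU (liftP (res1 (enum_val k)) (res2 (enum_val k))) =
            cut_image K eU (enum_val k).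
    by apply: cut_image_ext => E; exact: (cuts_res irr1 irr2 u1 u2).
  by rewrite subrr.
Qed.

End Main.

Unset Implicit Arguments.
Set Strict Implicit.

Theorem proposition5p2 (K : fieldType) (V1 V2 : finType)
    (e1 : rel V1) (e2 : rel V2)
    (sym1 : ssrbool.symmetric e1) (irr1 : irreflexive e1)
    (sym2 : ssrbool.symmetric e2) (irr2 : irreflexive e2)
    (u1 : V1) (u2 : V2) :
  (exists sigma : 'I_#|{: upart (zs_vert V1 u2)}| -> 'I_#|{: upart (V1 + V2)}|,
     injective sigma /\
     exists L : {mpoly K[#|{: upart (V1 + V2)}|]} -> Prop,
       min_gen_linear L (2 ^ (#|V1| + #|V2| - 2)) /\
       ideal_eq (cut_ideal K (dunion_rel e1 e2))
         (ideal_add (ideal_image (vmap (K := K) sigma)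
                                 (cut_ideal K (zs_rel e1 e2 u1 u2))) L))
  /\
  (exists lb : 'I_#|{: upart V1 * upart V2}| -> {mpoly K[#|{: upart (V1 + V2)}|]},
     (forall i, lb i \is 1.-homog) /\
     (forall f : {mpoly K[#|{: upart V1 * upart V2}|]},
        cut_ideal K (dunion_rel e1 e2) (f \mPo [tuple lb i | i < _])
        <-> segre_ideal K e1 e2 f) /\
     (forall k : 'I_#|{: upart (V1 + V2)}|,
        exists f : {mpoly K[#|{: upart V1 * upart V2}|]},
          f \is 1.-homog /\
          cut_ideal K (dunion_rel e1 e2) ('X_k - (f \mPo [tuple lb i | i < _])))).
Proof.
split; last exact: (part2 K irr1 irr2 u1 u2).
exists (sigma u1 (u2:=u2)); split; first exact: sigma_inj.
exists (Lid (K:=K) u1 u2); split; first exact: (min_gen K u1 u2).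
exact: (part1_eq irr1 irr2 u1 u2).
Qed.
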